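(* Let $S$ ($n\times n$, invertible), $U$ ($m\times n$), $V$ ($n\times m$) be complex matrices and $K$ an $n\times n$ matrix solving $S^{-1}K-KS=VU$. Then, with $\Xi=S^xe^{-t(S-S^{-1})}$ ($x\in\mathbb{Z}$, $t\in\mathbb{R}$), $$\mathcal{V}=-U\big(I+(\Xi K)^2\big)^{-1}\Xi V$$ (wherever the inverse exists) solves the $m\times m$ matrix semi-discrete modified KdV equation $\dot{\mathcal{V}}+\mathcal{V}^+(I+\mathcal{V}^2)-(I+\mathcal{V}^2)\mathcal{V}^-=0$.
   Context: $\mathcal{V}^\pm(x,t)=\mathcal{V}(x\pm1,t)$, $\dot{\mathcal{V}}=\partial_t\mathcal{V}$, $I=I_m$ in the equation and $I=I_n$ in the formula for $\mathcal{V}$. *)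

(* Defs.v *)
(* complex numbers as pairs of Stdlib reals, matrices as
   functions nat -> nat -> C with dimensions carried by the operations. *)
From Stdlib Require Import Reals ZArith.
Open Scope R_scope.

Definition C : Type := (R * R)%type.
Definition Re (z : C) : R := fst z.
Definition Im (z : C) : R := snd z.
Definition C0 : C := (0, 0).
Definition C1 : C := (1, 0).
Definition Cadd (z w : C) : C := (Re z + Re w, Im z + Im w).
Definition Copp (z : C) : C := (- Re z, - Im z).
Definition Cmul (z w : C) : C :=
  (Re z * Re w - Im z * Im w, Re z * Im w + Im z * Re w).
Definition RtoC (r : R) : C := (r, 0).

Fixpoint Csum (f : nat -> C) (p : nat) : C :=
  match p with O => C0 | S q => Cadd (Csum f q) (f q) end.

(* A matrix; only the entries with indices in range are meaningful. *)
Definition Mat : Type := nat -> nat -> C.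

Definition mI : Mat := fun i j => if Nat.eqb i j then C1 else C0.
Definition madd (A B : Mat) : Mat := fun i j => Cadd (A i j) (B i j).
Definition mopp (A : Mat) : Mat := fun i j => Copp (A i j).
Definition msub (A B : Mat) : Mat := madd A (mopp B).
Definition mscale (r : R) (A : Mat) : Mat := fun i j => Cmul (RtoC r) (A i j).
Definition mmul (p : nat) (A B : Mat) : Mat :=
  fun i j => Csum (fun k => Cmul (A i k) (B k j)) p.
Fixpoint mpow (n : nat) (A : Mat) (k : nat) : Mat :=
  match k with O => mI | S k' => mmul n (mpow n A k') A end.

Definition meq (r c : nat) (A B : Mat) : Prop :=
  forall i j, (i < r)%nat -> (j < c)%nat -> A i j = B i j.

Definition mpowZ (n : nat) (S Sinv : Mat) (x : Z) : Mat :=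
  if Z.leb 0 x then mpow n S (Z.to_nat x) else mpow n Sinv (Z.to_nat (- x)).

Definition is_mexp (n : nat) (A E : Mat) : Prop :=
  forall i j, (i < n)%nat -> (j < n)%nat ->
    Un_cv (fun N => Re (Csum (fun k => mscale (/ INR (fact k)) (mpow n A k) i j) N))
          (Re (E i j)) /\
    Un_cv (fun N => Im (Csum (fun k => mscale (/ INR (fact k)) (mpow n A k) i j) N))
          (Im (E i j)).

Definition mderiv_at (r c : nat) (F : R -> Mat) (t : R) (D : Mat) : Prop :=
  forall i j, (i < r)%nat -> (j < c)%nat ->
    derivable_pt_lim (fun s => Re (F s i j)) t (Re (D i j)) /\
    derivable_pt_lim (fun s => Im (F s i j)) t (Im (D i j)).

(* Main.v *)
From Stdlib Require Import Reals ZArith Lra Lia FunctionalExtensionality Setoid Morphisms.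
Require Import Defs.
Open Scope R_scope.

Lemma Cext : forall z w : C, Re z = Re w -> Im z = Im w -> z = w.
Proof. intros [a b] [c d]; simpl; unfold Re, Im; simpl; intros -> ->; reflexivity. Qed.

Ltac csimpl := unfold Cadd, Copp, Cmul, RtoC, C0, C1, Re, Im in *; simpl in *; unfold Re, Im in *; simpl in *.
Ltac cring := apply Cext; csimpl; ring.

Lemma Cadd_comm z w : Cadd z w = Cadd w z. Proof. cring. Qed.
Lemma Cadd_assoc z w u : Cadd (Cadd z w) u = Cadd z (Cadd w u). Proof. cring. Qed.
Lemma Cadd_0_l z : Cadd C0 z = z. Proof. cring. Qed.
Lemma Cadd_0_r z : Cadd z C0 = z. Proof. cring. Qed.
Lemma Cmul_comm z w : Cmul z w = Cmul w z. Proof. cring. Qed.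
Lemma Cmul_assoc z w u : Cmul (Cmul z w) u = Cmul z (Cmul w u). Proof. cring. Qed.
Lemma Cmul_0_l z : Cmul C0 z = C0. Proof. cring. Qed.
Lemma Cmul_0_r z : Cmul z C0 = C0. Proof. cring. Qed.
Lemma Cmul_1_l z : Cmul C1 z = z. Proof. cring. Qed.
Lemma Cmul_1_r z : Cmul z C1 = z. Proof. cring. Qed.
Lemma Cmul_add_l z w u : Cmul (Cadd z w) u = Cadd (Cmul z u) (Cmul w u). Proof. cring. Qed.
Lemma Cmul_add_r z w u : Cmul u (Cadd z w) = Cadd (Cmul u z) (Cmul u w). Proof. cring. Qed.
Lemma Cmul_opp_l z w : Cmul (Copp z) w = Copp (Cmul z w). Proof. cring. Qed.
Lemma Cmul_opp_r z w : Cmul z (Copp w) = Copp (Cmul z w). Proof. cring. Qed.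
Lemma Copp_add z w : Copp (Cadd z w) = Cadd (Copp z) (Copp w). Proof. cring. Qed.
Lemma Copp_0 : Copp C0 = C0. Proof. cring. Qed.

Lemma Csum_ext f g p : (forall k, (k < p)%nat -> f k = g k) -> Csum f p = Csum g p.
Proof. induction p; simpl; intros H; [reflexivity|]. rewrite IHp by (intros; apply H; lia). rewrite H by lia. reflexivity. Qed.
Lemma Csum_add f g p : Csum (fun k => Cadd (f k) (g k)) p = Cadd (Csum f p) (Csum g p).
Proof. induction p; simpl. cring. rewrite IHp. cring. Qed.
Lemma Csum_opp f p : Csum (fun k => Copp (f k)) p = Copp (Csum f p).
Proof. induction p; simpl. cring. rewrite IHp. cring. Qed.
Lemma Csum_mul_l a f p : Csum (fun k => Cmul a (f k)) p = Cmul a (Csum f p).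
Proof. induction p; simpl. cring. rewrite IHp. cring. Qed.
Lemma Csum_mul_r a f p : Csum (fun k => Cmul (f k) a) p = Cmul (Csum f p) a.
Proof. induction p; simpl. cring. rewrite IHp. cring. Qed.
Lemma Csum_zero p : Csum (fun _ => C0) p = C0.
Proof. induction p; simpl. reflexivity. rewrite IHp. cring. Qed.
Lemma Csum_swap f p q : Csum (fun k => Csum (fun l => f k l) q) p = Csum (fun l => Csum (fun k => f k l) p) q.
Proof.
  induction p; simpl. symmetry; apply Csum_zero.
  rewrite IHp. rewrite <- Csum_add. reflexivity.
Qed.
Lemma Csum_delta (a : nat -> C) i p : (i < p)%nat ->
  Csum (fun k => if Nat.eqb i k then a k else C0) p = a i.
Proof.
  induction p; intros H; [lia|]. simpl.
  destruct (Nat.eq_dec i p) as [->|Hne].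
  - rewrite Nat.eqb_refl. rewrite (Csum_ext _ (fun _ => C0)). rewrite Csum_zero. cring.
    intros k Hk. destruct (Nat.eqb_spec p k); [lia|reflexivity].
  - rewrite IHp by lia. destruct (Nat.eqb_spec i p); [lia|]. cring.
Qed.
Lemma Csum_delta' (a : nat -> C) i p : (i < p)%nat ->
  Csum (fun k => if Nat.eqb k i then a k else C0) p = a i.
Proof.
  intros H. rewrite <- (Csum_delta a i p H). apply Csum_ext. intros k _.
  rewrite Nat.eqb_sym. reflexivity.
Qed.

Lemma mat_ext (A B : Mat) : (forall i j, A i j = B i j) -> A = B.
Proof. intros H. extensionality i. extensionality j. apply H. Qed.

Lemma mmul_assoc p q A B Cc : mmul p (mmul q A B) Cc = mmul q A (mmul p B Cc).
Proof.
  apply mat_ext; intros i j; unfold mmul.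
  rewrite (Csum_ext (fun k => Cmul (Csum (fun k0 => Cmul (A i k0) (B k0 k)) q) (Cc k j))
     (fun k => Csum (fun l => Cmul (A i l) (Cmul (B l k) (Cc k j))) q)).
  2:{ intros k _. rewrite <- Csum_mul_r. apply Csum_ext. intros; apply Cmul_assoc. }
  rewrite Csum_swap. apply Csum_ext. intros l _. rewrite <- Csum_mul_l. reflexivity.
Qed.
Lemma mmul_add_l p A B Cc : mmul p (madd A B) Cc = madd (mmul p A Cc) (mmul p B Cc).
Proof. apply mat_ext; intros i j; unfold mmul, madd. rewrite <- Csum_add. apply Csum_ext; intros; apply Cmul_add_l. Qed.
Lemma mmul_add_r p A B Cc : mmul p Cc (madd A B) = madd (mmul p Cc A) (mmul p Cc B).
Proof. apply mat_ext; intros i j; unfold mmul, madd. rewrite <- Csum_add. apply Csum_ext; intros; apply Cmul_add_r. Qed.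
Lemma mmul_opp_l p A B : mmul p (mopp A) B = mopp (mmul p A B).
Proof. apply mat_ext; intros i j; unfold mmul, mopp. rewrite <- Csum_opp. apply Csum_ext; intros; apply Cmul_opp_l. Qed.
Lemma mmul_opp_r p A B : mmul p A (mopp B) = mopp (mmul p A B).
Proof. apply mat_ext; intros i j; unfold mmul, mopp. rewrite <- Csum_opp. apply Csum_ext; intros; apply Cmul_opp_r. Qed.
Lemma mmul_sub_l p A B Cc : mmul p (msub A B) Cc = msub (mmul p A Cc) (mmul p B Cc).
Proof. unfold msub. rewrite mmul_add_l, mmul_opp_l. reflexivity. Qed.
Lemma mmul_sub_r p A B Cc : mmul p Cc (msub A B) = msub (mmul p Cc A) (mmul p Cc B).
Proof. unfold msub. rewrite mmul_add_r, mmul_opp_r. reflexivity. Qed.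
Lemma mmul_scale_l p r A B : mmul p (mscale r A) B = mscale r (mmul p A B).
Proof. apply mat_ext; intros i j; unfold mmul, mscale. rewrite <- Csum_mul_l. apply Csum_ext; intros; apply Cmul_assoc. Qed.
Lemma mmul_scale_r p r A B : mmul p A (mscale r B) = mscale r (mmul p A B).
Proof. apply mat_ext; intros i j; unfold mmul, mscale. rewrite <- Csum_mul_l. apply Csum_ext; intros; cring. Qed.

Lemma mmul_I_l n A i j : (i < n)%nat -> mmul n mI A i j = A i j.
Proof.
  intros H; unfold mmul, mI.
  rewrite (Csum_ext _ (fun k => if Nat.eqb i k then A k j else C0)).
  apply (Csum_delta (fun k => A k j)); auto.
  intros k _. destruct (Nat.eqb i k); cring.
Qed.
Lemma mmul_I_r n A i j : (j < n)%nat -> mmul n A mI i j = A i j.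
Proof.
  intros H; unfold mmul, mI.
  rewrite (Csum_ext _ (fun k => if Nat.eqb k j then A i k else C0)).
  apply (Csum_delta' (fun k => A i k)); auto.
  intros k _. destruct (Nat.eqb k j); cring.
Qed.

Lemma meq_refl r c A : meq r c A A. Proof. intros i j _ _; reflexivity. Qed.
Lemma meq_sym r c A B : meq r c A B -> meq r c B A. Proof. intros H i j Hi Hj; symmetry; auto. Qed.
Lemma meq_trans r c A B D : meq r c A B -> meq r c B D -> meq r c A D.
Proof. intros H1 H2 i j Hi Hj; rewrite H1, H2; auto. Qed.

#[export] Instance meq_Equiv r c : Equivalence (meq r c).
Proof. split; [intro; apply meq_refl|intros ??; apply meq_sym|intros ???; apply meq_trans]. Qed.

Lemma meq_mul r p c A A' B B' : meq r p A A' -> meq p c B B' -> meq r c (mmul p A B) (mmul p A' B').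
Proof.
  intros H1 H2 i j Hi Hj; unfold mmul. apply Csum_ext; intros k Hk. rewrite H1, H2; auto.
Qed.
Lemma meq_add r c A A' B B' : meq r c A A' -> meq r c B B' -> meq r c (madd A B) (madd A' B').
Proof. intros H1 H2 i j Hi Hj; unfold madd; rewrite H1, H2; auto. Qed.
Lemma meq_opp r c A A' : meq r c A A' -> meq r c (mopp A) (mopp A').
Proof. intros H1 i j Hi Hj; unfold mopp; rewrite H1; auto. Qed.
Lemma meq_sub r c A A' B B' : meq r c A A' -> meq r c B B' -> meq r c (msub A B) (msub A' B').
Proof. intros; unfold msub; apply meq_add; auto; apply meq_opp; auto. Qed.
Lemma meq_scale r c s A A' : meq r c A A' -> meq r c (mscale s A) (mscale s A').
Proof. intros H1 i j Hi Hj; unfold mscale; rewrite H1; auto. Qed.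

Lemma meq_I_l r c A : meq r c (mmul r mI A) A.
Proof. intros i j Hi Hj; apply mmul_I_l; auto. Qed.
Lemma meq_I_r r c A : meq r c (mmul c A mI) A.
Proof. intros i j Hi Hj; apply mmul_I_r; auto. Qed.

#[export] Instance mmul_Proper r p c : Proper (meq r p ==> meq p c ==> meq r c) (mmul p).
Proof. intros A A' H1 B B' H2; apply meq_mul; auto. Qed.
#[export] Instance madd_Proper r c : Proper (meq r c ==> meq r c ==> meq r c) madd.
Proof. intros A A' H1 B B' H2; apply meq_add; auto. Qed.
#[export] Instance msub_Proper r c : Proper (meq r c ==> meq r c ==> meq r c) msub.
Proof. intros A A' H1 B B' H2; apply meq_sub; auto. Qed.
#[export] Instance mopp_Proper r c : Proper (meq r c ==> meq r c) mopp.
Proof. intros A A' H1; apply meq_opp; auto. Qed.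
#[export] Instance mscale_Proper r c s : Proper (meq r c ==> meq r c) (mscale s).
Proof. intros A A' H1; apply meq_scale; auto. Qed.

Ltac norm := unfold msub; repeat (rewrite ?mmul_assoc, ?mmul_add_l, ?mmul_add_r, ?mmul_opp_l, ?mmul_opp_r).
Ltac mring := let i := fresh in let j := fresh in intros i j _ _; unfold madd, mopp, msub; cring.

Lemma canc n c A B D Z : meq n n (mmul n A B) D -> meq n c (mmul n A (mmul n B Z)) (mmul n D Z).
Proof. intros H. rewrite <- mmul_assoc. rewrite H. reflexivity. Qed.
Lemma cancI n c A B Z : meq n n (mmul n A B) mI -> meq n c (mmul n A (mmul n B Z)) Z.
Proof. intros H. rewrite <- mmul_assoc. rewrite H. apply meq_I_l. Qed.
Lemma cancI_r n r A B Z : meq n n (mmul n A B) mI -> meq r n (mmul n (mmul n Z A) B) Z.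
Proof. intros H. rewrite mmul_assoc. rewrite H. apply meq_I_r. Qed.

Lemma madd_opp_r r c A B : meq r c (madd (madd A B) (mopp B)) A. Proof. mring. Qed.

Definition Mof n X K := madd mI (mmul n (mmul n X K) (mmul n X K)).
Definition isinv n M W := meq n n (mmul n W M) mI /\ meq n n (mmul n M W) mI.

Lemma Mcomm n T : meq n n (mmul n (madd mI (mmul n T T)) T) (mmul n T (madd mI (mmul n T T))).
Proof. rewrite mmul_add_l, mmul_add_r, (meq_I_l n n T), (meq_I_r n n T). norm. reflexivity. Qed.

Lemma inv_comm n T W : isinv n (madd mI (mmul n T T)) W -> meq n n (mmul n T W) (mmul n W T).
Proof.
  intros [H1 H2].
  transitivity (mmul n W (mmul n (madd mI (mmul n T T)) (mmul n T W))).
  symmetry; apply cancI; auto.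
  rewrite <- (mmul_assoc n n _ T W), Mcomm, mmul_assoc, H2, (meq_I_r n n T). reflexivity.
Qed.

Lemma step_c n S Si T D :
  meq n n (mmul n S Si) mI ->
  meq n n (msub (mmul n Si T) (mmul n T S)) D ->
  meq n n (mmul n T Si) (madd (mmul n S T) (mmul n S (mmul n D Si))).
Proof.
  intros HS1 Ha.
  transitivity (mmul n S (mmul n Si (mmul n T Si))). symmetry; apply cancI; auto.
  assert (E: meq n n (mmul n Si T) (madd D (mmul n T S))) by (rewrite <- Ha; mring).
  rewrite <- (mmul_assoc n n Si T Si), E. norm. rewrite HS1, (meq_I_r n n T). mring.
Qed.

Section Pair.
Variable n : nat.
Variables Sg Si T0 T1 X0 X1 B W0 W1 : Mat.
Local Notation "A ** B" := (mmul n A B) (at level 40, left associativity).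
Local Notation "A == B" := (meq n n A B) (at level 70).
Hypothesis HS1 : Sg ** Si == mI.
Hypothesis HS2 : Si ** Sg == mI.
Hypothesis Ha : msub (Si ** T0) (T0 ** Sg) == X0 ** B.
Hypothesis HX1 : X1 == Sg ** X0.
Hypothesis HT1 : T1 == Sg ** T0.
Hypothesis HW0 : isinv n (madd mI (T0 ** T0)) W0.
Hypothesis HW1 : isinv n (madd mI (T1 ** T1)) W1.

Lemma p_b : Sg ** (T0 ** Sg) == msub T0 (Sg ** (X0 ** B)).
Proof.
  rewrite <- Ha. rewrite mmul_sub_r. rewrite (cancI n n Sg Si T0 HS1). mring.
Qed.

Lemma p_d : madd mI (T1 ** T1) == msub (madd mI (T0 ** T0)) (Sg ** (X0 ** (B ** T0))).
Proof.
  rewrite HT1. rewrite mmul_assoc, <- (mmul_assoc n n T0 Sg T0), <- (mmul_assoc n n Sg _ T0), p_b.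
  norm. mring.
Qed.

Lemma p_G1' : W1 == madd W0 (W0 ** (Sg ** (X0 ** (B ** (T0 ** W1))))).
Proof.
  destruct HW0 as [H01 H02]; destruct HW1 as [H11 H12].
  transitivity (madd (W0 ** (madd mI (T1 ** T1) ** W1)) (W0 ** (Sg ** (X0 ** (B ** (T0 ** W1)))))).
  2:{ rewrite H12, (meq_I_r n n W0). reflexivity. }
  rewrite p_d, mmul_sub_l, mmul_sub_r, (cancI n n W0 _ W1 H01). norm. mring.
Qed.

Lemma p_G1 : W1 == madd W0 (W1 ** (Sg ** (X0 ** (B ** (T0 ** W0))))).
Proof.
  destruct HW0 as [H01 H02]; destruct HW1 as [H11 H12].
  assert (E : madd mI (T0 ** T0) == madd (madd mI (T1 ** T1)) (Sg ** (X0 ** (B ** T0)))) by (rewrite p_d; mring).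
  transitivity (W1 ** (madd mI (T0 ** T0) ** W0)).
  - rewrite H02, (meq_I_r n n W1). reflexivity.
  - rewrite E, mmul_add_l, mmul_add_r, (cancI n n W1 _ W0 H11). norm. reflexivity.
Qed.

Lemma p_R : W1 ** (X1 ** (B ** (W0 ** X0))) == msub (T0 ** (W0 ** X0)) (Sg ** (T0 ** (W1 ** X1))).
Proof.
  destruct HW0 as [H01 H02]; destruct HW1 as [H11 H12].
  assert (K1 : madd mI (T1 ** T1) ** (T0 ** (W0 ** X0)) == msub (T0 ** X0) (Sg ** (X0 ** (B ** (T0 ** (T0 ** (W0 ** X0))))))).
  { rewrite p_d, mmul_sub_l. rewrite <- (mmul_assoc n n _ T0 _), Mcomm, mmul_assoc, (cancI n n _ W0 X0 H02). norm. reflexivity. }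
  assert (K2 : madd mI (T1 ** T1) ** (Sg ** (T0 ** (W1 ** X1))) == msub (T0 ** X0) (Sg ** (X0 ** (B ** X0)))).
  { rewrite <- (mmul_assoc n n Sg T0 _), <- HT1. rewrite <- (mmul_assoc n n _ T1 _), Mcomm, mmul_assoc, (cancI n n _ W1 X1 H12).
    rewrite HT1, HX1. rewrite mmul_assoc, <- (mmul_assoc n n T0 Sg X0), <- (mmul_assoc n n Sg _ X0), p_b. norm. mring. }
  assert (K3 : madd mI (T1 ** T1) ** (W1 ** (X1 ** (B ** (W0 ** X0)))) == Sg ** (X0 ** (B ** (W0 ** X0)))).
  { rewrite (cancI n n _ W1 _ H12), HX1. norm. reflexivity. }
  assert (K4 : X0 == madd (W0 ** X0) (T0 ** (T0 ** (W0 ** X0)))).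
  { transitivity (madd mI (T0 ** T0) ** (W0 ** X0)). rewrite (cancI n n _ W0 X0 H02). reflexivity.
    rewrite mmul_add_l, (meq_I_l n n). norm. reflexivity. }
  assert (K5 : Sg ** (X0 ** (B ** X0)) == madd (Sg ** (X0 ** (B ** (W0 ** X0)))) (Sg ** (X0 ** (B ** (T0 ** (T0 ** (W0 ** X0))))))).
  { transitivity (Sg ** (X0 ** (B ** (madd (W0 ** X0) (T0 ** (T0 ** (W0 ** X0))))))).
    apply meq_mul; [reflexivity|apply meq_mul;[reflexivity|apply meq_mul;[reflexivity|exact K4]]].
    norm. reflexivity. }
  transitivity (W1 ** (madd mI (T1 ** T1) ** (W1 ** (X1 ** (B ** (W0 ** X0)))))).
  { symmetry; apply cancI; auto. }
  transitivity (W1 ** (madd mI (T1 ** T1) ** msub (T0 ** (W0 ** X0)) (Sg ** (T0 ** (W1 ** X1))))).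
  2:{ apply cancI; auto. }
  apply meq_mul; [reflexivity|].
  rewrite K3, mmul_sub_r, K1, K2, K5. mring.
Qed.

Lemma p_L : W0 ** (Sg ** (X0 ** (B ** (Si ** (W1 ** X1))))) == W1 ** (X1 ** (B ** (W0 ** X0))).
Proof.
  destruct HW0 as [H01 H02]; destruct HW1 as [H11 H12].
  assert (C1 : Sg ** (madd mI (T0 ** T0) ** (W0 ** X0)) == X1).
  { rewrite (cancI n n _ W0 X0 H02), HX1. reflexivity. }
  assert (C2 : X1 == madd (W1 ** X1) (Sg ** (T0 ** (Sg ** (T0 ** (W1 ** X1)))))).
  { transitivity (madd mI (T1 ** T1) ** (W1 ** X1)). rewrite (cancI n n _ W1 X1 H12). reflexivity.
    rewrite mmul_add_l, (meq_I_l n n), HT1. norm. reflexivity. }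
  assert (D0 : W1 ** X1 == msub (Sg ** (madd mI (T0 ** T0) ** (W0 ** X0))) (Sg ** (T0 ** (Sg ** (T0 ** (W1 ** X1)))))).
  { rewrite C1. transitivity (msub (madd (W1 ** X1) (Sg ** (T0 ** (Sg ** (T0 ** (W1 ** X1)))))) (Sg ** (T0 ** (Sg ** (T0 ** (W1 ** X1)))))).
    mring. apply meq_sub; [symmetry; exact C2|reflexivity]. }
  assert (D1 : Si ** (W1 ** X1) == msub (madd (W0 ** X0) (T0 ** (T0 ** (W0 ** X0)))) (T0 ** (Sg ** (T0 ** (W1 ** X1))))).
  { rewrite D0 at 1. rewrite mmul_sub_r, (cancI n n Si Sg _ HS2), (cancI n n Si Sg _ HS2).
    rewrite mmul_add_l, (meq_I_l n n). norm. reflexivity. }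
  assert (R := p_R).
  assert (D2 : Si ** (W1 ** X1) == madd (W0 ** X0) (T0 ** (W1 ** (X1 ** (B ** (W0 ** X0)))))).
  { rewrite D1, R, mmul_sub_r. mring. }
  transitivity (W0 ** (madd mI (T0 ** T0) ** (W1 ** (X1 ** (B ** (W0 ** X0)))))).
  2:{ apply cancI; auto. }
  apply meq_mul; [reflexivity|].
  assert (E : madd mI (T0 ** T0) == madd (madd mI (T1 ** T1)) (Sg ** (X0 ** (B ** T0)))) by (rewrite p_d; mring).
  rewrite D2, E, mmul_add_l, (cancI n n _ W1 _ H12), HX1. norm. mring.
Qed.
End Pair.

Section Main.
Variable n : nat.
Variables Sg Si B X Xp Xm T Tp Tm W Wp Wm Xd Td : Mat.
Local Notation "A ** B" := (mmul n A B) (at level 40, left associativity).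
Local Notation "A == B" := (meq n n A B) (at level 70).
Hypothesis HS1 : Sg ** Si == mI.
Hypothesis HS2 : Si ** Sg == mI.
Hypothesis Ha : msub (Si ** T) (T ** Sg) == X ** B.
Hypothesis Ham : msub (Si ** Tm) (Tm ** Sg) == Xm ** B.
Hypothesis HXp : Xp == Sg ** X.
Hypothesis HTp : Tp == Sg ** T.
Hypothesis HX : X == Sg ** Xm.
Hypothesis HT : T == Sg ** Tm.
Hypothesis HW : isinv n (madd mI (T ** T)) W.
Hypothesis HWp : isinv n (madd mI (Tp ** Tp)) Wp.
Hypothesis HWm : isinv n (madd mI (Tm ** Tm)) Wm.
Hypothesis HXd : Xd == mopp (msub (Sg ** X) (Si ** X)).
Hypothesis HTd : Td == mopp (msub (Sg ** T) (Si ** T)).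

Lemma m_f : madd (Td ** T) (T ** Td) == madd (X ** (B ** T)) (Sg ** (X ** (B ** (Si ** T)))).
Proof.
  assert (TS : forall Z, T ** (Sg ** Z) == msub (Si ** (T ** Z)) (X ** (B ** Z))).
  { intros Z. rewrite <- (mmul_assoc n n T Sg Z).
    assert (E : T ** Sg == msub (Si ** T) (X ** B)) by (rewrite <- Ha; mring).
    rewrite E. norm. reflexivity. }
  assert (TSi : forall Z, T ** (Si ** Z) == madd (Sg ** (T ** Z)) (Sg ** (X ** (B ** (Si ** Z))))).
  { intros Z. rewrite <- (mmul_assoc n n T Si Z), (step_c n Sg Si T (X ** B) HS1 Ha). norm. reflexivity. }
  rewrite HTd. norm. rewrite TS, TSi. norm. mring.
Qed.

Lemma Xm_eq : Xm == Si ** X.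
Proof. rewrite HX, (cancI n n Si Sg Xm HS2). reflexivity. Qed.
Lemma Tm_eq : Tm == Si ** T.
Proof. rewrite HT, (cancI n n Si Sg Tm HS2). reflexivity. Qed.


Lemma m_main : madd (mopp (W ** (madd (Td ** T) (T ** Td) ** (W ** X)))) (W ** Xd) ==
  msub (madd (Wm ** Xm) (W ** (X ** (B ** (W ** (X ** (B ** (Wm ** Xm))))))))
       (madd (Wp ** Xp) (Wp ** (Xp ** (B ** (W ** (X ** (B ** (W ** X)))))))).
Proof.
  pose proof (p_G1' n Sg Si T Tp X B W Wp HS1 Ha HTp HW HWp) as Gp.
  pose proof (p_R n Sg Si T Tp X Xp B W Wp HS1 Ha HXp HTp HW HWp) as Rp.
  pose proof (p_L n Sg Si T Tp X Xp B W Wp HS1 HS2 Ha HXp HTp HW HWp) as Lp.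
  pose proof (p_G1 n Sg Si Tm T Xm B Wm W HS1 Ham HT HWm HW) as Gm.
  pose proof (p_R n Sg Si Tm T Xm X B Wm W HS1 Ham HX HT HWm HW) as Rm.
  pose proof m_f as F.
  assert (Lp' : forall Z, W ** (Sg ** (X ** (B ** (Si ** (Wp ** (Xp ** Z)))))) == Wp ** (Xp ** (B ** (W ** (X ** Z))))).
  { intros Z. assert (H := meq_mul n n n _ _ Z Z Lp (meq_refl n n Z)). repeat rewrite mmul_assoc in H. exact H. }
  assert (EWm : Wm == msub W (W ** (Sg ** (Xm ** (B ** (Tm ** Wm)))))).
  { transitivity (msub (madd Wm (W ** (Sg ** (Xm ** (B ** (Tm ** Wm)))))) (W ** (Sg ** (Xm ** (B ** (Tm ** Wm)))))).
    mring. apply meq_sub; [symmetry; exact Gm|reflexivity]. }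
  assert (EQm : Tm ** (Wm ** Xm) == madd (W ** (X ** (B ** (Wm ** Xm)))) (T ** (W ** X))).
  { rewrite Rm. rewrite <- (mmul_assoc n n Sg Tm _), <- HT. mring. }
  assert (EYm : Wm ** Xm == msub (W ** Xm) (W ** (X ** (B ** (madd (T ** (W ** X)) (W ** (X ** (B ** (Wm ** Xm))))))))).
  { transitivity (msub W (W ** (Sg ** (Xm ** (B ** (Tm ** Wm))))) ** Xm).
    apply meq_mul; [exact EWm|reflexivity].
    rewrite mmul_sub_l. norm. rewrite EQm. rewrite <- (mmul_assoc n n Sg Xm _), <- HX. norm. mring. }
  assert (ETp : Sg ** (T ** (Wp ** Xp)) == msub (T ** (W ** X)) (Wp ** (Xp ** (B ** (W ** X))))).
  { rewrite Rp. mring. }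
  assert (ETp2 : T ** (Wp ** Xp) == msub (Si ** (T ** (W ** X))) (Si ** (Wp ** (Xp ** (B ** (W ** X)))))).
  { rewrite <- mmul_sub_r, <- ETp, (cancI n n Si Sg _ HS2). reflexivity. }
  assert (EYp : Wp ** Xp == msub (madd (W ** (Sg ** X)) (W ** (Sg ** (X ** (B ** (Si ** (T ** (W ** X)))))))) (Wp ** (Xp ** (B ** (W ** (X ** (B ** (W ** X)))))))).
  { transitivity (madd W (W ** (Sg ** (X ** (B ** (T ** Wp))))) ** Xp).
    apply meq_mul; [exact Gp|reflexivity].
    rewrite mmul_add_l. norm. rewrite ETp2. norm. rewrite Lp'. rewrite HXp at 1. norm. mring. }
  transitivity (msub (madd (msub (W ** Xm) (W ** (X ** (B ** (madd (T ** (W ** X)) (W ** (X ** (B ** (Wm ** Xm))))))))) (W ** (X ** (B ** (W ** (X ** (B ** (Wm ** Xm))))))))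
       (madd (msub (madd (W ** (Sg ** X)) (W ** (Sg ** (X ** (B ** (Si ** (T ** (W ** X)))))))) (Wp ** (Xp ** (B ** (W ** (X ** (B ** (W ** X)))))))) (Wp ** (Xp ** (B ** (W ** (X ** (B ** (W ** X))))))))).
  2:{ apply meq_sub; apply meq_add; try reflexivity; symmetry; assumption. }
  rewrite F, HXd. rewrite Xm_eq at 1. norm. mring.
Qed.
End Main.

Lemma mpow_succ_l n A k : meq n n (mpow n A (S k)) (mmul n A (mpow n A k)).
Proof.
  induction k.
  - simpl. rewrite (meq_I_l n n A), (meq_I_r n n A). reflexivity.
  - change (mpow n A (S (S k))) with (mmul n (mpow n A (S k)) A).
    rewrite IHk at 1. rewrite mmul_assoc. reflexivity.
Qed.

Lemma mpow_comm n A B k : meq n n (mmul n A B) (mmul n B A) ->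
  meq n n (mmul n (mpow n A k) B) (mmul n B (mpow n A k)).
Proof.
  intros H; induction k.
  - simpl. rewrite (meq_I_l n n B), (meq_I_r n n B). reflexivity.
  - simpl. rewrite mmul_assoc, H, <- mmul_assoc, IHk, mmul_assoc. reflexivity.
Qed.

Lemma mpowZ_succ n Sg Si y : meq n n (mmul n Sg Si) mI ->
  meq n n (mpowZ n Sg Si (y + 1)) (mmul n Sg (mpowZ n Sg Si y)).
Proof.
  intros HS1. unfold mpowZ.
  destruct (Z.leb_spec 0 y).
  - destruct (Z.leb_spec 0 (y+1)); [|lia].
    replace (Z.to_nat (y+1)) with (S (Z.to_nat y)) by lia. apply mpow_succ_l.
  - destruct (Z.leb_spec 0 (y+1)).
    + assert (y = -1)%Z by lia. subst. simpl.
      rewrite (meq_I_l n n Si). symmetry; exact HS1.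
    + replace (Z.to_nat (- y)) with (S (Z.to_nat (- (y+1)))) by lia.
      rewrite mpow_succ_l. rewrite (cancI n n Sg Si _ HS1). reflexivity.
Qed.

Lemma mpowZ_comm n Sg Si y B :
  meq n n (mmul n Sg B) (mmul n B Sg) -> meq n n (mmul n Si B) (mmul n B Si) ->
  meq n n (mmul n (mpowZ n Sg Si y) B) (mmul n B (mpowZ n Sg Si y)).
Proof.
  intros H1 H2; unfold mpowZ; destruct (Z.leb 0 y); apply mpow_comm; auto.
Qed.

Lemma comm_inv n Sg Si B : meq n n (mmul n Sg Si) mI -> meq n n (mmul n Si Sg) mI ->
  meq n n (mmul n Sg B) (mmul n B Sg) -> meq n n (mmul n Si B) (mmul n B Si).
Proof.
  intros HS1 HS2 H.
  transitivity (mmul n Si (mmul n B (mmul n Sg Si))).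
  rewrite HS1, (meq_I_r n n B). reflexivity.
  rewrite <- (mmul_assoc n n B Sg Si), <- H, mmul_assoc, (cancI n n Si Sg _ HS2). reflexivity.
Qed.

Fixpoint Rsum (f : nat -> R) (p : nat) : R := match p with O => 0 | S q => Rsum f q + f q end.

Lemma Rsum_ext f g p : (forall k, (k < p)%nat -> f k = g k) -> Rsum f p = Rsum g p.
Proof. induction p; simpl; intros H; auto. rewrite IHp, H by (auto; lia). reflexivity. Qed.
Lemma Rsum_le f g p : (forall k, (k < p)%nat -> f k <= g k) -> Rsum f p <= Rsum g p.
Proof. induction p; simpl; intros H. lra. assert (H1 := H p ltac:(lia)). assert (H2 : Rsum f p <= Rsum g p) by (apply IHp; intros; apply H; lia). lra. Qed.
Lemma Rsum_nonneg f p : (forall k, (k < p)%nat -> 0 <= f k) -> 0 <= Rsum f p.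
Proof. intros H. replace 0 with (Rsum (fun _ => 0) p). apply Rsum_le; auto. induction p; simpl; auto. rewrite IHp. ring. intros; apply H; lia. Qed.
Lemma Rsum_add f g p : Rsum (fun k => f k + g k) p = Rsum f p + Rsum g p.
Proof. induction p; simpl. ring. rewrite IHp. ring. Qed.
Lemma Rsum_mul_l a f p : Rsum (fun k => a * f k) p = a * Rsum f p.
Proof. induction p; simpl. ring. rewrite IHp. ring. Qed.
Lemma Rsum_const0 p : Rsum (fun _ => 0) p = 0.
Proof. induction p; simpl; auto. rewrite IHp; ring. Qed.
Lemma Rsum_swap f p q : Rsum (fun k => Rsum (fun l => f k l) q) p = Rsum (fun l => Rsum (fun k => f k l) p) q.
Proof. induction p; simpl. symmetry; apply Rsum_const0. rewrite IHp, <- Rsum_add. reflexivity. Qed.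
Lemma Rsum_term f p i : (forall k, (k < p)%nat -> 0 <= f k) -> (i < p)%nat -> f i <= Rsum f p.
Proof.
  induction p; intros H Hi; [lia|]. simpl.
  destruct (Nat.eq_dec i p) as [->|Hne].
  - assert (0 <= Rsum f p) by (apply Rsum_nonneg; intros; apply H; lia). lra.
  - assert (f i <= Rsum f p) by (apply IHp; [intros; apply H; lia|lia]). assert (0 <= f p) by (apply H; lia). lra.
Qed.

Definition cn (z : C) : R := Rabs (Re z) + Rabs (Im z).
Definition mnorm (r c : nat) (A : Mat) : R := Rsum (fun i => Rsum (fun j => cn (A i j)) c) r.

Lemma cn_nonneg z : 0 <= cn z. Proof. unfold cn. pose proof (Rabs_pos (Re z)); pose proof (Rabs_pos (Im z)); lra. Qed.
Lemma cn_Re z : Rabs (Re z) <= cn z. Proof. unfold cn. pose proof (Rabs_pos (Im z)); lra. Qed.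
Lemma cn_Im z : Rabs (Im z) <= cn z. Proof. unfold cn. pose proof (Rabs_pos (Re z)); lra. Qed.
Lemma cn_add z w : cn (Cadd z w) <= cn z + cn w.
Proof. unfold cn, Cadd, Re, Im; simpl. pose proof (Rabs_triang (fst z) (fst w)); pose proof (Rabs_triang (snd z) (snd w)); lra. Qed.
Lemma cn_opp z : cn (Copp z) = cn z.
Proof. unfold cn, Copp, Re, Im; simpl. rewrite !Rabs_Ropp. reflexivity. Qed.
Lemma cn_mul z w : cn (Cmul z w) <= cn z * cn w.
Proof.
  unfold cn, Cmul, Re, Im; simpl. destruct z as [a b], w as [c d]; simpl.
  pose proof (Rabs_triang (a*c) (- (b*d))); pose proof (Rabs_triang (a*d) (b*c)).
  rewrite Rabs_Ropp in H. rewrite !Rabs_mult in H, H0.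
  pose proof (Rabs_pos a); pose proof (Rabs_pos b); pose proof (Rabs_pos c); pose proof (Rabs_pos d).
  unfold Rminus. nra.
Qed.
Lemma cn_scale x z : cn (Cmul (RtoC x) z) = Rabs x * cn z.
Proof. unfold cn, Cmul, RtoC, Re, Im; simpl. replace (x * fst z - 0 * snd z) with (x * fst z) by ring.
  replace (x * snd z + 0 * fst z) with (x * snd z) by ring. rewrite !Rabs_mult. ring. Qed.
Lemma cn_Csum f p : cn (Csum f p) <= Rsum (fun k => cn (f k)) p.
Proof. induction p; simpl. unfold cn, C0, Re, Im; simpl; rewrite Rabs_R0; lra.
  pose proof (cn_add (Csum f p) (f p)). lra. Qed.
Lemma Rabs0 x : Rabs x = 0 -> x = 0.
Proof. intros H; destruct (Req_dec x 0); auto. exfalso; apply (Rabs_no_R0 x); auto. Qed.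

Lemma cn_zero z : cn z = 0 -> z = C0.
Proof. unfold cn; intros H. pose proof (Rabs_pos (Re z)); pose proof (Rabs_pos (Im z)).
  assert (Rabs (Re z) = 0) by lra. assert (Rabs (Im z) = 0) by lra.
  apply Cext; unfold C0, Re, Im in *; simpl; apply Rabs0; auto. Qed.

Lemma mnorm_nonneg r c A : 0 <= mnorm r c A.
Proof. apply Rsum_nonneg; intros; apply Rsum_nonneg; intros; apply cn_nonneg. Qed.
Lemma mnorm_entry r c A i j : (i < r)%nat -> (j < c)%nat -> cn (A i j) <= mnorm r c A.
Proof.
  intros Hi Hj. unfold mnorm.
  apply Rle_trans with (Rsum (fun j => cn (A i j)) c).
  apply (Rsum_term (fun j => cn (A i j))); auto; intros; apply cn_nonneg.
  apply (Rsum_term (fun i => Rsum (fun j => cn (A i j)) c)); auto. intros; apply Rsum_nonneg; intros; apply cn_nonneg.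
Qed.
Lemma mnorm_meq r c A B : meq r c A B -> mnorm r c A = mnorm r c B.
Proof. intros H; unfold mnorm. apply Rsum_ext; intros; apply Rsum_ext; intros. rewrite H; auto. Qed.
Lemma mnorm_add r c A B : mnorm r c (madd A B) <= mnorm r c A + mnorm r c B.
Proof. unfold mnorm. rewrite <- Rsum_add. apply Rsum_le; intros. rewrite <- Rsum_add. apply Rsum_le; intros. apply cn_add. Qed.
Lemma mnorm_opp r c A : mnorm r c (mopp A) = mnorm r c A.
Proof. unfold mnorm, mopp. apply Rsum_ext; intros; apply Rsum_ext; intros. apply cn_opp. Qed.
Lemma mnorm_sub r c A B : mnorm r c (msub A B) <= mnorm r c A + mnorm r c B.
Proof. unfold msub. rewrite <- (mnorm_opp r c B). apply mnorm_add. Qed.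
Lemma mnorm_scale r c x A : mnorm r c (mscale x A) = Rabs x * mnorm r c A.
Proof. unfold mnorm, mscale. rewrite <- Rsum_mul_l. apply Rsum_ext; intros. rewrite <- Rsum_mul_l. apply Rsum_ext; intros. apply cn_scale. Qed.
Lemma mnorm_mul r p c A B : mnorm r c (mmul p A B) <= mnorm r p A * mnorm p c B.
Proof.
  unfold mnorm at 1, mmul.
  apply Rle_trans with (Rsum (fun i => Rsum (fun j => Rsum (fun k => cn (A i k) * cn (B k j)) p) c) r).
  { apply Rsum_le; intros; apply Rsum_le; intros. eapply Rle_trans. apply cn_Csum. apply Rsum_le; intros; apply cn_mul. }
  rewrite (Rsum_ext _ (fun i => Rsum (fun k => cn (A i k) * Rsum (fun j => cn (B k j)) c) p)).
  2:{ intros i _. rewrite Rsum_swap. apply Rsum_ext; intros. rewrite <- Rsum_mul_l. reflexivity. }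
  unfold mnorm. rewrite Rmult_comm, <- Rsum_mul_l. apply Rsum_le; intros i _.
  rewrite <- Rsum_mul_l. apply Rsum_le; intros k Hk. rewrite (Rmult_comm (mnorm p c B)).
  apply Rmult_le_compat_l. apply cn_nonneg. unfold mnorm.
  apply (Rsum_term (fun k => Rsum (fun j => cn (B k j)) c)); auto. intros; apply Rsum_nonneg; intros; apply cn_nonneg.
Qed.
Lemma Rsum_ind i q : Rsum (fun j => if Nat.eqb i j then 1 else 0) q = if Nat.ltb i q then 1 else 0.
Proof.
  induction q; simpl. destruct i; reflexivity.
  rewrite IHq. destruct (Nat.ltb_spec i q), (Nat.eqb_spec i q), (Nat.ltb_spec i (S q)); try lia; lra.
Qed.
Lemma mnorm_I n : mnorm n n mI <= INR n.
Proof.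
  unfold mnorm.
  apply Rle_trans with (Rsum (fun _ => 1) n).
  - apply Rsum_le; intros i Hi.
    rewrite (Rsum_ext _ (fun j => if Nat.eqb i j then 1 else 0)).
    + rewrite Rsum_ind. destruct (Nat.ltb i n); lra.
    + intros j _. unfold mI, cn. destruct (Nat.eqb i j); unfold Re, Im, C1, C0; simpl; rewrite ?Rabs_R1, ?Rabs_R0; ring.
  - right. clear. induction n; [reflexivity|]. rewrite S_INR. change (Rsum (fun _ => 1) (S n)) with (Rsum (fun _ => 1) n + 1). rewrite IHn. reflexivity.
Qed.

Lemma mnorm_zero r c A B : (forall e, 0 < e -> mnorm r c (msub A B) <= e) -> meq r c A B.
Proof.
  intros H i j Hi Hj.
  assert (cn (msub A B i j) = 0).
  { apply Rle_antisym; [|apply cn_nonneg]. apply Rnot_lt_le; intros Hlt.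
    pose proof (H (cn (msub A B i j) / 2) ltac:(lra)). pose proof (mnorm_entry r c (msub A B) i j Hi Hj). lra. }
  apply cn_zero in H0. unfold msub, madd, mopp in H0.
  destruct (A i j) as [a1 b1], (B i j) as [c1 d1]. unfold Cadd, Copp, C0, Re, Im in H0; simpl in H0.
  injection H0; intros; f_equal; lra.
Qed.

Lemma dpl_ext (f g : R -> R) x l l' : (forall s, f s = g s) -> l = l' -> derivable_pt_lim f x l -> derivable_pt_lim g x l'.
Proof. intros H <-. replace g with f by (extensionality s; auto). auto. Qed.
Lemma dpl_add f g x l1 l2 : derivable_pt_lim f x l1 -> derivable_pt_lim g x l2 -> derivable_pt_lim (fun s => f s + g s) x (l1 + l2).
Proof. intros H1 H2. exact (derivable_pt_lim_plus f g x l1 l2 H1 H2). Qed.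
Lemma dpl_opp f x l : derivable_pt_lim f x l -> derivable_pt_lim (fun s => - f s) x (- l).
Proof. intros H1. exact (derivable_pt_lim_opp f x l H1). Qed.
Lemma dpl_mul f g x l1 l2 : derivable_pt_lim f x l1 -> derivable_pt_lim g x l2 -> derivable_pt_lim (fun s => f s * g s) x (l1 * g x + f x * l2).
Proof. intros H1 H2. exact (derivable_pt_lim_mult f g x l1 l2 H1 H2). Qed.
Lemma dpl_const a x : derivable_pt_lim (fun _ => a) x 0.
Proof. exact (derivable_pt_lim_const a x). Qed.

Definition Cder (f : R -> C) (t : R) (d : C) : Prop :=
  derivable_pt_lim (fun s => Re (f s)) t (Re d) /\ derivable_pt_lim (fun s => Im (f s)) t (Im d).

Lemma Cder_ext f g t d d' : (forall s, f s = g s) -> d = d' -> Cder f t d -> Cder g t d'.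
Proof. intros H <- [H1 H2]; split; eapply dpl_ext; eauto; intros; simpl; rewrite H; auto. Qed.
Lemma Cder_const z t : Cder (fun _ => z) t C0.
Proof. split; apply dpl_const. Qed.
Lemma Cder_add f g t d1 d2 : Cder f t d1 -> Cder g t d2 -> Cder (fun s => Cadd (f s) (g s)) t (Cadd d1 d2).
Proof. intros [H1 H2] [H3 H4]; split; unfold Cadd, Re, Im in *; simpl; apply dpl_add; auto. Qed.
Lemma Cder_opp f t d : Cder f t d -> Cder (fun s => Copp (f s)) t (Copp d).
Proof. intros [H1 H2]; split; unfold Copp, Re, Im in *; simpl; apply dpl_opp; auto. Qed.
Lemma Cder_mul f g t d1 d2 : Cder f t d1 -> Cder g t d2 ->
  Cder (fun s => Cmul (f s) (g s)) t (Cadd (Cmul d1 (g t)) (Cmul (f t) d2)).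
Proof.
  intros [H1 H2] [H3 H4]; split; unfold Cmul, Cadd, Re, Im in *; simpl.
  - pose proof (dpl_mul _ _ _ _ _ H1 H3) as A. pose proof (dpl_mul _ _ _ _ _ H2 H4) as B.
    pose proof (dpl_add _ _ _ _ _ A (dpl_opp _ _ _ B)) as Cc.
    eapply dpl_ext; [|idtac|exact Cc]. intros; simpl; ring. simpl; ring.
  - pose proof (dpl_mul _ _ _ _ _ H1 H4) as A. pose proof (dpl_mul _ _ _ _ _ H2 H3) as B.
    pose proof (dpl_add _ _ _ _ _ A B) as Cc.
    eapply dpl_ext; [|idtac|exact Cc]. intros; simpl; ring. simpl; ring.
Qed.
Lemma Cder_Csum (f : nat -> R -> C) (d : nat -> C) t p :
  (forall k, (k < p)%nat -> Cder (f k) t (d k)) -> Cder (fun s => Csum (fun k => f k s) p) t (Csum d p).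
Proof.
  induction p; intros H; simpl. apply Cder_const.
  apply Cder_add; [apply IHp; intros; apply H; lia|apply H; lia].
Qed.
Lemma Cder_rscale (p : R -> R) p' z t : derivable_pt_lim p t p' ->
  Cder (fun s => Cmul (RtoC (p s)) z) t (Cmul (RtoC p') z).
Proof.
  intros H; split; unfold Cmul, RtoC, Re, Im; simpl.
  - pose proof (dpl_mul _ _ _ _ _ H (dpl_const (fst z) t)) as A.
    eapply dpl_ext; [|idtac|exact A]. intros; simpl; ring. simpl; ring.
  - pose proof (dpl_mul _ _ _ _ _ H (dpl_const (snd z) t)) as A.
    eapply dpl_ext; [|idtac|exact A]. intros; simpl; ring. simpl; ring.
Qed.

Lemma mderiv_ext r c F G t D D' : (forall s, meq r c (F s) (G s)) -> meq r c D D' ->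
  mderiv_at r c F t D -> mderiv_at r c G t D'.
Proof.
  intros H1 H2 H i j Hi Hj. destruct (H i j Hi Hj) as [A B].
  change (Cder (fun s => G s i j) t (D' i j)). eapply Cder_ext; [| |split; [exact A|exact B]].
  intros; simpl; apply H1; auto. apply H2; auto.
Qed.
Lemma mderiv_const r c A t : mderiv_at r c (fun _ => A) t (fun _ _ => C0).
Proof. intros i j _ _. apply Cder_const. Qed.
Lemma mderiv_add r c F G t D1 D2 : mderiv_at r c F t D1 -> mderiv_at r c G t D2 ->
  mderiv_at r c (fun s => madd (F s) (G s)) t (madd D1 D2).
Proof. intros H1 H2 i j Hi Hj. apply (Cder_add (fun s => F s i j) (fun s => G s i j)); [apply H1|apply H2]; auto. Qed.
Lemma mderiv_opp r c F t D : mderiv_at r c F t D -> mderiv_at r c (fun s => mopp (F s)) t (mopp D).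
Proof. intros H1 i j Hi Hj. apply (Cder_opp (fun s => F s i j)); apply H1; auto. Qed.
Lemma mderiv_mul r p c F G t D1 D2 : mderiv_at r p F t D1 -> mderiv_at p c G t D2 ->
  mderiv_at r c (fun s => mmul p (F s) (G s)) t (madd (mmul p D1 (G t)) (mmul p (F t) D2)).
Proof.
  intros H1 H2 i j Hi Hj. unfold mmul, madd.
  eapply Cder_ext; [intros; reflexivity| |].
  2:{ apply (Cder_Csum (fun k s => Cmul (F s i k) (G s k j))). intros k Hk.
      apply (Cder_mul (fun s => F s i k) (fun s => G s k j)); [apply H1|apply H2]; auto. }
  simpl. rewrite Csum_add. reflexivity.
Qed.

Lemma mscale_mscale a b A : mscale a (mscale b A) = mscale (a * b) A.
Proof. apply mat_ext; intros; unfold mscale. cring. Qed.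
Lemma mscale_1 A : mscale 1 A = A.
Proof. apply mat_ext; intros; unfold mscale. cring. Qed.

Lemma mpow_scale n x A k : mpow n (mscale x A) k = mscale (x ^ k) (mpow n A k).
Proof.
  induction k; simpl. symmetry; apply mscale_1.
  rewrite IHk, mmul_scale_l, mmul_scale_r, mscale_mscale. f_equal. ring.
Qed.

Lemma mnorm_mpow n A k : mnorm n n (mpow n A k) <= INR n * (mnorm n n A) ^ k.
Proof.
  induction k; simpl. rewrite Rmult_1_r. apply mnorm_I.
  eapply Rle_trans. apply mnorm_mul.
  apply Rle_trans with ((INR n * mnorm n n A ^ k) * mnorm n n A).
  apply Rmult_le_compat_r; [apply mnorm_nonneg|exact IHk]. right; ring.
Qed.

Definition Msum (F : nat -> Mat) (N : nat) : Mat := fun i j => Csum (fun k => F k i j) N.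

Lemma Msum_S F N : Msum F (S N) = madd (Msum F N) (F N).
Proof. reflexivity. Qed.
Lemma mmul_Msum_l p A F N : mmul p A (Msum F N) = Msum (fun k => mmul p A (F k)) N.
Proof.
  apply mat_ext; intros i j; unfold mmul, Msum.
  rewrite (Csum_ext _ (fun l => Csum (fun k => Cmul (A i l) (F k l j)) N)).
  2:{ intros; rewrite Csum_mul_l; reflexivity. }
  apply Csum_swap.
Qed.
Lemma mmul_Msum_r p A F N : mmul p (Msum F N) A = Msum (fun k => mmul p (F k) A) N.
Proof.
  apply mat_ext; intros i j; unfold mmul, Msum.
  rewrite (Csum_ext _ (fun l => Csum (fun k => Cmul (F k i l) (A l j)) N)).
  2:{ intros; rewrite Csum_mul_r; reflexivity. }
  apply Csum_swap.
Qed.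
Lemma meq_Msum r c F G N : (forall k, meq r c (F k) (G k)) -> meq r c (Msum F N) (Msum G N).
Proof. intros H i j Hi Hj; unfold Msum; apply Csum_ext; intros; apply H; auto. Qed.

Lemma Msum_diff n F N d : mnorm n n (msub (Msum F (N + d)) (Msum F N)) <= Rsum (fun k => mnorm n n (F (N + k)%nat)) d.
Proof.
  induction d; simpl.
  - rewrite Nat.add_0_r. rewrite (mnorm_meq n n _ (fun _ _ => C0)). 
    unfold mnorm. rewrite (Rsum_ext _ (fun _ => 0)). rewrite Rsum_const0; lra.
    intros; rewrite (Rsum_ext _ (fun _ => 0)). apply Rsum_const0. intros; unfold cn, C0, Re, Im; simpl; rewrite Rabs_R0; ring.
    mring.
  - rewrite Nat.add_succ_r, Msum_S.
    rewrite (mnorm_meq n n _ (madd (msub (Msum F (N + d)) (Msum F N)) (F (N + d)%nat))) by mring.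
    eapply Rle_trans. apply mnorm_add. lra.
Qed.

Lemma cv_abs_diff (u : nat -> R) l : Un_cv u l -> Un_cv (fun N => Rabs (l - u N)) 0.
Proof.
  intros H e He. destruct (H e He) as [N HN]. exists N; intros k Hk.
  specialize (HN k Hk). unfold Rdist in *. rewrite Rminus_0_r, Rabs_Rabsolu, <- Rabs_Ropp.
  replace (- (l - u k)) with (u k - l) by ring. auto.
Qed.

Lemma Rsum_cv (u : nat -> nat -> R) p : (forall k, (k < p)%nat -> Un_cv (fun N => u N k) 0) ->
  Un_cv (fun N => Rsum (u N) p) 0.
Proof.
  induction p; intros H; simpl.
  - intros e He; exists O; intros; unfold Rdist; rewrite Rminus_0_r, Rabs_R0; auto.
  - replace 0 with (0 + 0) by ring. apply CV_plus. apply IHp; intros; apply H; lia. apply H; lia.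
Qed.

Lemma mnorm_cv r c (F : nat -> Mat) L :
  (forall i j, (i < r)%nat -> (j < c)%nat -> Un_cv (fun N => Re (F N i j)) (Re (L i j)) /\ Un_cv (fun N => Im (F N i j)) (Im (L i j))) ->
  Un_cv (fun N => mnorm r c (msub L (F N))) 0.
Proof.
  intros H. unfold mnorm. apply (Rsum_cv (fun N i => Rsum (fun j => cn (msub L (F N) i j)) c)).
  intros i Hi. apply (Rsum_cv (fun N j => cn (msub L (F N) i j))). intros j Hj.
  destruct (H i j Hi Hj) as [H1 H2]. unfold cn, msub, madd, mopp, Cadd, Copp, Re, Im; simpl.
  replace 0 with (0 + 0) by ring. apply CV_plus.
  apply (cv_abs_diff (fun N => fst (F N i j))). exact H1.
  apply (cv_abs_diff (fun N => snd (F N i j))). exact H2.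
Qed.

Lemma Rsum_split f N d : Rsum f (N + d) = Rsum f N + Rsum (fun k => f (N + k)%nat) d.
Proof. induction d; simpl. rewrite Nat.add_0_r; ring. rewrite Nat.add_succ_r; simpl. rewrite IHd; ring. Qed.

Lemma Rsum_sum_f f N : Rsum f (S N) = sum_f_R0 f N.
Proof. induction N; simpl. ring. simpl in IHN. rewrite <- IHN. ring. Qed.

Definition bsum (rho : R) (N : nat) : R := Rsum (fun k => rho ^ k / INR (fact k)) N.

Lemma bsum_cv rho : Un_cv (bsum rho) (exp rho).
Proof.
  apply (CV_shift _ 1). eapply Un_cv_ext; [|apply E1_cvg].
  intros N. unfold E1, bsum. rewrite Nat.add_1_r, Rsum_sum_f. apply sum_eq; intros. unfold Rdiv; ring.
Qed.

Lemma bsum_term_nonneg rho k : 0 <= rho -> 0 <= rho ^ k / INR (fact k).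
Proof. intros H. unfold Rdiv. apply Rmult_le_pos. apply pow_le; auto. left; apply Rinv_0_lt_compat, INR_fact_lt_0. Qed.

Lemma bsum_le rho N : 0 <= rho -> bsum rho N <= exp rho.
Proof.
  intros H. apply growing_ineq; [|apply bsum_cv].
  intros k. unfold bsum; simpl. pose proof (bsum_term_nonneg rho k H). lra.
Qed.
Lemma bsum_mono rho N M : 0 <= rho -> (N <= M)%nat -> bsum rho N <= bsum rho M.
Proof.
  intros H HNM. replace M with (N + (M - N))%nat by lia. unfold bsum at 2. rewrite Rsum_split.
  assert (0 <= Rsum (fun k => rho ^ (N + k) / INR (fact (N + k))) (M - N)) by (apply Rsum_nonneg; intros; apply bsum_term_nonneg; auto).
  unfold bsum; lra.
Qed.

Section Exp.
Variable n : nat.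
Variable A : Mat.
Variable E : R -> Mat.
Hypothesis HE : forall t, is_mexp n (mscale (- t) A) (E t).

Definition term (k : nat) (y : R) : Mat := mscale (/ INR (fact k)) (mpow n (mscale (- y) A) k).
Definition Fm (N : nat) (y : R) : Mat := Msum (fun k => term k y) N.

Lemma term_bound k y r : Rabs y <= r ->
  mnorm n n (term k y) <= INR n * ((r * mnorm n n A) ^ k / INR (fact k)).
Proof.
  intros Hy. unfold term. rewrite mnorm_scale.
  rewrite Rabs_right by (left; apply Rinv_0_lt_compat, INR_fact_lt_0).
  eapply Rle_trans. apply Rmult_le_compat_l. left; apply Rinv_0_lt_compat, INR_fact_lt_0. apply mnorm_mpow.
  rewrite mnorm_scale, Rabs_Ropp.
  apply Rle_trans with (/ INR (fact k) * (INR n * (r * mnorm n n A) ^ k)).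
  - apply Rmult_le_compat_l. left; apply Rinv_0_lt_compat, INR_fact_lt_0.
    apply Rmult_le_compat_l. apply pos_INR. apply pow_incr. split.
    apply Rmult_le_pos; [apply Rabs_pos|apply mnorm_nonneg].
    apply Rmult_le_compat_r; [apply mnorm_nonneg|auto].
  - right; unfold Rdiv; ring.
Qed.

Lemma Fm_diff y r N M : Rabs y <= r -> (N <= M)%nat ->
  mnorm n n (msub (Fm M y) (Fm N y)) <= INR n * (bsum (r * mnorm n n A) M - bsum (r * mnorm n n A) N).
Proof.
  intros Hy HNM. replace M with (N + (M - N))%nat by lia. unfold Fm.
  eapply Rle_trans. apply Msum_diff.
  unfold bsum at 1. rewrite Rsum_split.
  replace (Rsum (fun k => (r * mnorm n n A) ^ k / INR (fact k)) N +
     Rsum (fun k => (r * mnorm n n A) ^ (N + k) / INR (fact (N + k))) (M - N) - bsum (r * mnorm n n A) N)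
   with (Rsum (fun k => (r * mnorm n n A) ^ (N + k) / INR (fact (N + k))) (M - N)) by (unfold bsum; ring).
  rewrite <- Rsum_mul_l. apply Rsum_le; intros. apply term_bound; auto.
Qed.

Lemma Fm_cv y : Un_cv (fun N => mnorm n n (msub (E y) (Fm N y))) 0.
Proof. apply mnorm_cv. intros i j Hi Hj. apply (HE y i j Hi Hj). Qed.

Lemma tail_bound y r N : Rabs y <= r ->
  mnorm n n (msub (E y) (Fm N y)) <= INR n * (exp (r * mnorm n n A) - bsum (r * mnorm n n A) N).
Proof.
  intros Hy. apply Rle_plus_epsilon. intros e He.
  destruct (Fm_cv y e He) as [M0 HM0].
  set (M := Nat.max M0 N).
  specialize (HM0 M ltac:(lia)). unfold Rdist in HM0. rewrite Rminus_0_r, Rabs_right in HM0 by (apply Rle_ge, mnorm_nonneg).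
  rewrite (mnorm_meq n n _ (madd (msub (E y) (Fm M y)) (msub (Fm M y) (Fm N y)))) by mring.
  eapply Rle_trans. apply mnorm_add.
  pose proof (Fm_diff y r N M Hy ltac:(lia)).
  assert (r * mnorm n n A >= 0 \/ r * mnorm n n A < 0) as [Hp|Hn] by lra.
  - pose proof (bsum_le (r * mnorm n n A) M ltac:(lra)).
    pose proof (pos_INR n).
    assert (INR n * (bsum (r * mnorm n n A) M - bsum (r * mnorm n n A) N) <= INR n * (exp (r * mnorm n n A) - bsum (r * mnorm n n A) N)) by (apply Rmult_le_compat_l; lra).
    lra.
  - exfalso. assert (0 <= r) by (pose proof (Rabs_pos y); lra). pose proof (mnorm_nonneg n n A).
    assert (0 <= r * mnorm n n A) by (apply Rmult_le_pos; auto). lra.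
Qed.
End Exp.

Lemma Csum_shift f N : Csum f (S N) = Cadd (f 0%nat) (Csum (fun k => f (S k)) N).
Proof. induction N; simpl in *. cring. rewrite IHN. cring. Qed.

Lemma cv_S (u : nat -> R) l : Un_cv u l -> Un_cv (fun N => u (S N)) l.
Proof. intros H e He. destruct (H e He) as [N HN]. exists N; intros; apply HN; lia. Qed.

Lemma Re_diff a b : Rabs (Re (Cadd a (Copp b)) - Re a) <= cn b.
Proof. unfold Cadd, Copp, cn, Re, Im; simpl. replace (fst a + - fst b - fst a) with (- fst b) by ring. rewrite Rabs_Ropp. pose proof (Rabs_pos (snd b)); lra. Qed.
Lemma Im_diff a b : Rabs (Im (Cadd a (Copp b)) - Im a) <= cn b.
Proof. unfold Cadd, Copp, cn, Re, Im; simpl. replace (snd a + - snd b - snd a) with (- snd b) by ring. rewrite Rabs_Ropp. pose proof (Rabs_pos (fst b)); lra. Qed.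

Section Exp2.
Variable n : nat.
Variable A : Mat.
Variable E : R -> Mat.
Hypothesis HE : forall t, is_mexp n (mscale (- t) A) (E t).

Lemma term_entry k y i j : term n A k y i j = Cmul (RtoC (/ INR (fact k) * (-1) ^ k * y ^ k)) (mpow n A k i j).
Proof.
  unfold term. rewrite mpow_scale, mscale_mscale. unfold mscale.
  replace (- y) with (-1 * y) by ring. rewrite Rpow_mult_distr. f_equal. f_equal. ring.
Qed.

Definition dcoef (k : nat) (y : R) : R := / INR (fact k) * (-1) ^ k * (INR k * y ^ pred k).

Lemma Fm_der N y i j : Cder (fun s => Fm n A (S N) s i j) y
   (Csum (fun k => Cmul (RtoC (dcoef k y)) (mpow n A k i j)) (S N)).
Proof.
  unfold Fm, Msum. apply (Cder_Csum (fun k s => term n A k s i j)). intros k _.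
  eapply Cder_ext; [intros s; symmetry; apply term_entry|reflexivity|].
  apply Cder_rscale. unfold dcoef.
  eapply dpl_ext; [| |apply (derivable_pt_lim_scal (fun s => s ^ k) (/ INR (fact k) * (-1) ^ k) y _ (derivable_pt_lim_pow y k))].
  intros s; unfold mult_real_fct; ring. ring.
Qed.

Lemma dcoef_S k y : dcoef (S k) y = - (/ INR (fact k) * (-1) ^ k * y ^ k).
Proof.
  unfold dcoef. rewrite fact_simpl, mult_INR. simpl pred. change ((-1) ^ (S k)) with (-1 * (-1) ^ k).
  pose proof (INR_fact_neq_0 k). assert (INR (S k) <> 0) by (rewrite S_INR; pose proof (pos_INR k); lra).
  field; auto.
Qed.

Lemma Fm_der_val N y i j : (i < n)%nat -> (j < n)%nat ->
  Csum (fun k => Cmul (RtoC (dcoef k y)) (mpow n A k i j)) (S N) = mopp (mmul n A (Fm n A N y)) i j.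
Proof.
  intros Hi Hj. rewrite Csum_shift.
  replace (dcoef 0 y) with 0 by (unfold dcoef; simpl; ring).
  unfold Fm. rewrite mmul_Msum_l. unfold mopp, Msum. rewrite <- Csum_opp.
  rewrite Cmul_comm. unfold RtoC. replace (Cmul (mpow n A 0 i j) (0, 0)) with C0 by cring. rewrite Cadd_0_l.
  apply Csum_ext; intros k _. rewrite dcoef_S. unfold term.
  rewrite mpow_scale, mscale_mscale, mmul_scale_r. unfold mscale.
  change (mpow n A (S k)) with (mpow n A (S k)).
  rewrite (mpow_succ_l n A k i j Hi Hj).
  replace (- y) with (-1 * y) by ring. rewrite Rpow_mult_distr. cring.
Qed.

Lemma E_deriv t0 : mderiv_at n n E t0 (mopp (mmul n A (E t0))).
Proof.
  intros i j Hi Hj.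
  set (r := Rabs t0 + 1). set (rho := r * mnorm n n A).
  assert (Hrho : 0 <= rho) by (unfold rho, r; apply Rmult_le_pos; [pose proof (Rabs_pos t0); lra|apply mnorm_nonneg]).
  assert (Hball : forall y, Boule t0 (mkposreal 1 Rlt_0_1) y -> Rabs y <= r).
  { intros y Hy. unfold Boule in Hy; simpl in Hy. unfold r.
    pose proof (Rabs_triang (y - t0) t0). replace (y - t0 + t0) with y in H by ring. lra. }
  assert (Hunif : forall e, 0 < e -> exists N, forall N' y, (N <= N')%nat -> Boule t0 (mkposreal 1 Rlt_0_1) y ->
            cn (mmul n A (msub (E y) (Fm n A N' y)) i j) < e).
  { intros e He.
    set (K := mnorm n n A * INR n + 1).
    assert (HK : 0 < K) by (unfold K; pose proof (mnorm_nonneg n n A); pose proof (pos_INR n); nra).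
    destruct (bsum_cv rho (e / K) ltac:(apply Rdiv_lt_0_compat; auto)) as [N HN].
    exists N; intros N' y HN' Hy.
    specialize (HN N' HN'). unfold Rdist in HN.
    pose proof (bsum_le rho N' Hrho).
    rewrite Rabs_left1 in HN by lra.
    eapply Rle_lt_trans. apply (mnorm_entry n n); auto.
    eapply Rle_lt_trans. apply mnorm_mul.
    pose proof (tail_bound n A E HE y r N' (Hball y Hy)). fold rho in H0.
    pose proof (mnorm_nonneg n n A).
    apply Rle_lt_trans with (mnorm n n A * (INR n * (exp rho - bsum rho N'))).
    apply Rmult_le_compat_l; auto.
    apply Rle_lt_trans with (K * (exp rho - bsum rho N')).
    unfold K. pose proof (pos_INR n). nra.
    replace e with (K * (e / K)) by (field; lra). apply Rmult_lt_compat_l; auto. lra. }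
  assert (Hder : forall N y, Cder (fun s => Fm n A (S N) s i j) y (mopp (mmul n A (Fm n A N y)) i j)).
  { intros N y. eapply Cder_ext; [intros; reflexivity| |apply Fm_der]. apply Fm_der_val; auto. }
  assert (Hdiff : forall N y, mopp (mmul n A (E y)) i j = Cadd (mopp (mmul n A (Fm n A N y)) i j) (Copp (mmul n A (msub (E y) (Fm n A N y)) i j))).
  { intros. rewrite mmul_sub_r. unfold mopp, msub, madd. cring. }
  split.
  - apply (CVU_derivable (fun N s => Re (Fm n A (S N) s i j)) (fun N s => Re (mopp (mmul n A (Fm n A N s)) i j))
            (fun s => Re (E s i j)) (fun s => Re (mopp (mmul n A (E s)) i j)) t0 (mkposreal 1 Rlt_0_1)).
    + intros e He. destruct (Hunif e He) as [N HN]. exists N. intros N' y HN' Hy.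
      rewrite (Hdiff N' y). eapply Rle_lt_trans; [|apply (HN N' y HN' Hy)]. first [apply Re_diff|apply Im_diff].
    + intros y _. apply (cv_S (fun N => Re (Fm n A N y i j))). apply (HE y i j Hi Hj).
    + intros N y _. apply (Hder N y).
    + unfold Boule; simpl. rewrite Rminus_diag, Rabs_R0; lra.
  - apply (CVU_derivable (fun N s => Im (Fm n A (S N) s i j)) (fun N s => Im (mopp (mmul n A (Fm n A N s)) i j))
            (fun s => Im (E s i j)) (fun s => Im (mopp (mmul n A (E s)) i j)) t0 (mkposreal 1 Rlt_0_1)).
    + intros e He. destruct (Hunif e He) as [N HN]. exists N. intros N' y HN' Hy.
      rewrite (Hdiff N' y). eapply Rle_lt_trans; [|apply (HN N' y HN' Hy)]. first [apply Re_diff|apply Im_diff].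
    + intros y _. apply (cv_S (fun N => Im (Fm n A N y i j))). apply (HE y i j Hi Hj).
    + intros N y _. apply (Hder N y).
    + unfold Boule; simpl. rewrite Rminus_diag, Rabs_R0; lra.
Qed.
End Exp2.

Lemma mnorm_zero_mat r c : mnorm r c (fun _ _ => C0) = 0.
Proof. unfold mnorm. rewrite (Rsum_ext _ (fun _ => 0)). apply Rsum_const0.
  intros; rewrite (Rsum_ext _ (fun _ => 0)). apply Rsum_const0. intros; unfold cn, C0, Re, Im; simpl; rewrite Rabs_R0; ring. Qed.

Section Exp3.
Variable n : nat.
Variable A : Mat.
Variable E : R -> Mat.
Hypothesis HE : forall t, is_mexp n (mscale (- t) A) (E t).

Lemma Fm_comm B N t : meq n n (mmul n A B) (mmul n B A) -> meq n n (mmul n B (Fm n A N t)) (mmul n (Fm n A N t) B).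
Proof.
  intros H. unfold Fm. rewrite mmul_Msum_l, mmul_Msum_r. apply meq_Msum. intros k.
  unfold term. rewrite mmul_scale_l, mmul_scale_r. apply meq_scale. symmetry. apply mpow_comm.
  rewrite mmul_scale_l, mmul_scale_r. apply meq_scale. auto.
Qed.

Lemma E_comm B t : meq n n (mmul n A B) (mmul n B A) -> meq n n (mmul n B (E t)) (mmul n (E t) B).
Proof.
  intros H. apply mnorm_zero. intros e He.
  set (K := 2 * mnorm n n B + 1).
  assert (HK : 0 < K) by (unfold K; pose proof (mnorm_nonneg n n B); lra).
  destruct (Fm_cv n A E HE t (e / K) ltac:(apply Rdiv_lt_0_compat; auto)) as [N HN].
  specialize (HN N ltac:(lia)). unfold Rdist in HN. rewrite Rminus_0_r, Rabs_right in HN by (apply Rle_ge, mnorm_nonneg).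
  set (D := msub (E t) (Fm n A N t)) in *.
  rewrite (mnorm_meq n n _ (madd (msub (mmul n B D) (mmul n D B)) (msub (mmul n B (Fm n A N t)) (mmul n (Fm n A N t) B)))).
  2:{ unfold D. rewrite mmul_sub_l, mmul_sub_r. mring. }
  eapply Rle_trans. apply mnorm_add.
  rewrite (mnorm_meq n n (msub (mmul n B (Fm n A N t)) (mmul n (Fm n A N t) B)) (fun _ _ => C0)) by (rewrite (Fm_comm B N t H); mring).
  rewrite mnorm_zero_mat.
  eapply Rle_trans. apply Rplus_le_compat_r. apply mnorm_sub.
  pose proof (mnorm_mul n n n B D). pose proof (mnorm_mul n n n D B).
  pose proof (mnorm_nonneg n n B). pose proof (mnorm_nonneg n n D).
  apply Rle_trans with (K * mnorm n n D). unfold K; nra.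
  replace e with (K * (e / K)) by (field; lra). apply Rmult_le_compat_l; lra.
Qed.
End Exp3.

Definition nlim0 (phi : R -> R) : Prop :=
  forall e, 0 < e -> exists d, 0 < d /\ forall h, h <> 0 -> Rabs h < d -> phi h < e.

Lemma nlim0_add f g : nlim0 f -> nlim0 g -> nlim0 (fun h => f h + g h).
Proof.
  intros Hf Hg e He. destruct (Hf (e/2) ltac:(lra)) as [d1 [Hd1 H1]]. destruct (Hg (e/2) ltac:(lra)) as [d2 [Hd2 H2]].
  exists (Rmin d1 d2). split. apply Rmin_pos; auto. intros h Hh Hhd.
  pose proof (Rmin_l d1 d2); pose proof (Rmin_r d1 d2).
  specialize (H1 h Hh ltac:(lra)); specialize (H2 h Hh ltac:(lra)). lra.
Qed.
Lemma nlim0_zero : nlim0 (fun _ => 0).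
Proof. intros e He; exists 1; split; [lra|]; intros; auto. Qed.
Lemma nlim0_Rsum (u : nat -> R -> R) p : (forall k, (k < p)%nat -> nlim0 (u k)) -> nlim0 (fun h => Rsum (fun k => u k h) p).
Proof.
  induction p; intros H; simpl. apply nlim0_zero.
  apply (nlim0_add (fun h => Rsum (fun k => u k h) p) (u p)). apply IHp; intros; apply H; lia. apply H; lia.
Qed.

Definition dq (r c : nat) (F : R -> Mat) (t : R) (D : Mat) (h : R) : R :=
  mnorm r c (msub (mscale (/ h) (msub (F (t + h)) (F t))) D).

Lemma dq_entry F t D h i j :
  msub (mscale (/ h) (msub (F (t + h)) (F t))) D i j =
  (((Re (F (t + h) i j) - Re (F t i j)) / h - Re (D i j)), ((Im (F (t + h) i j) - Im (F t i j)) / h - Im (D i j))).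
Proof. unfold msub, madd, mopp, mscale. apply Cext; csimpl; unfold Rdiv; ring. Qed.

Lemma mderiv_nlim r c F t D : mderiv_at r c F t D -> nlim0 (dq r c F t D).
Proof.
  intros H. unfold dq, mnorm.
  apply (nlim0_Rsum (fun i h => Rsum (fun j => cn (msub (mscale (/ h) (msub (F (t + h)) (F t))) D i j)) c)). intros i Hi.
  apply (nlim0_Rsum (fun j h => cn (msub (mscale (/ h) (msub (F (t + h)) (F t))) D i j))). intros j Hj.
  destruct (H i j Hi Hj) as [H1 H2].
  intros e He. unfold cn. 
  destruct (H1 (e/2) ltac:(lra)) as [d1 Hd1]. destruct (H2 (e/2) ltac:(lra)) as [d2 Hd2].
  exists (Rmin d1 d2). split. apply Rmin_pos; apply cond_pos. intros h Hh Hhd.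
  pose proof (Rmin_l d1 d2); pose proof (Rmin_r d1 d2).
  specialize (Hd1 h Hh ltac:(lra)); specialize (Hd2 h Hh ltac:(lra)).
  rewrite dq_entry. unfold Re at 1, Im at 1; simpl. lra.
Qed.

Lemma nlim_mderiv r c F t D : nlim0 (dq r c F t D) -> mderiv_at r c F t D.
Proof.
  intros H i j Hi Hj. split.
  - intros e He. destruct (H e He) as [d [Hd Hh]]. exists (mkposreal d Hd). intros h Hh0 Hhd. simpl in Hhd.
    specialize (Hh h Hh0 Hhd). unfold dq in Hh.
    cbv beta. pose proof (mnorm_entry r c (msub (mscale (/ h) (msub (F (t + h)) (F t))) D) i j Hi Hj). rewrite dq_entry in H0. unfold cn, Re at 1, Im at 1 in H0; simpl in H0.
    pose proof (Rabs_pos ((Im (F (t + h) i j) - Im (F t i j)) / h - Im (D i j))). lra.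
  - intros e He. destruct (H e He) as [d [Hd Hh]]. exists (mkposreal d Hd). intros h Hh0 Hhd. simpl in Hhd.
    specialize (Hh h Hh0 Hhd). unfold dq in Hh.
    cbv beta. pose proof (mnorm_entry r c (msub (mscale (/ h) (msub (F (t + h)) (F t))) D) i j Hi Hj). rewrite dq_entry in H0. unfold cn, Re at 1, Im at 1 in H0; simpl in H0.
    pose proof (Rabs_pos ((Re (F (t + h) i j) - Re (F t i j)) / h - Re (D i j))). lra.
Qed.

Lemma mscale_inv_back (h : R) (A : Mat) : h <> 0 -> mscale h (mscale (/ h) A) = A.
Proof. intros Hh. rewrite mscale_mscale, Rinv_r by auto. apply mscale_1. Qed.

Lemma inv_deriv n (M W : R -> Mat) t0 eps Md :
  0 < eps -> (forall s, Rabs (s - t0) < eps -> isinv n (M s) (W s)) -> mderiv_at n n M t0 Md ->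
  mderiv_at n n W t0 (mopp (mmul n (W t0) (mmul n Md (W t0)))).
Proof.
  intros Heps HW HM. apply nlim_mderiv.
  pose proof (mderiv_nlim _ _ _ _ _ HM) as Hq.
  set (w := mnorm n n (W t0)). set (md := mnorm n n Md).
  assert (Hw : 0 <= w) by apply mnorm_nonneg. assert (Hmd : 0 <= md) by apply mnorm_nonneg.
  intros e He.
  set (K := 2*w*w + 2*w*w*w*md + 1).
  assert (HK : 0 < K) by (unfold K; assert (0 <= w*w) by (apply Rmult_le_pos; auto); assert (0 <= w*w*w*md) by (repeat apply Rmult_le_pos; auto); lra).
  destruct (Hq (e/K) ltac:(apply Rdiv_lt_0_compat; auto)) as [d1 [Hd1 H1]].
  destruct (Hq 1 ltac:(lra)) as [d2 [Hd2 H2]].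
  set (b := Rmin (e/K) (/ (2 * (w + 1)))).
  assert (Hb : 0 < b) by (apply Rmin_pos; [apply Rdiv_lt_0_compat; auto|apply Rinv_0_lt_compat; lra]).
  set (d3 := b / (md + 1)).
  assert (Hd3 : 0 < d3) by (apply Rdiv_lt_0_compat; lra).
  exists (Rmin eps (Rmin d1 (Rmin d2 d3))). split. repeat apply Rmin_pos; auto.
  intros h Hh Hhd.
  pose proof (Rmin_l eps (Rmin d1 (Rmin d2 d3))). pose proof (Rmin_r eps (Rmin d1 (Rmin d2 d3))).
  pose proof (Rmin_l d1 (Rmin d2 d3)). pose proof (Rmin_r d1 (Rmin d2 d3)).
  pose proof (Rmin_l d2 d3). pose proof (Rmin_r d2 d3).
  specialize (H1 h Hh ltac:(lra)). specialize (H2 h Hh ltac:(lra)).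
  unfold dq in H1, H2 |- *.
  set (Dl := msub (M (t0 + h)) (M t0)) in *.
  set (sD := mscale (/ h) Dl) in *.
  set (q := mnorm n n (msub sD Md)) in *.
  assert (Hq0 : 0 <= q) by apply mnorm_nonneg.
  assert (F1 : mnorm n n Dl <= Rabs h * (md + 1)).
  { replace Dl with (mscale h sD) by (unfold sD; apply mscale_inv_back; auto).
    rewrite mnorm_scale. apply Rmult_le_compat_l. apply Rabs_pos.
    rewrite (mnorm_meq n n sD (madd (msub sD Md) Md)) by mring.
    eapply Rle_trans. apply mnorm_add. fold md. fold q. lra. }
  assert (Hb1 : b <= e / K) by apply Rmin_l.
  assert (Hb2 : b <= / (2 * (w + 1))) by apply Rmin_r.
  assert (FD : mnorm n n Dl <= b).
  { eapply Rle_trans. apply F1. apply Rle_trans with (d3 * (md + 1)).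
    apply Rmult_le_compat_r; lra. unfold d3. right; field; lra. }
  destruct (HW (t0 + h) ltac:(replace (t0 + h - t0) with h by ring; lra)) as [Hh1 Hh2].
  destruct (HW t0 ltac:(rewrite Rminus_diag, Rabs_R0; lra)) as [H01 H02].
  set (Wh := W (t0 + h)) in *. set (W0 := W t0) in *.
  assert (F3 : meq n n (msub Wh W0) (mopp (mmul n Wh (mmul n Dl W0)))).
  { transitivity (msub (mmul n Wh (mmul n (M t0) W0)) (mmul n (mmul n Wh (M (t0 + h))) W0)).
    - rewrite H02, Hh1, (meq_I_r n n Wh), (meq_I_l n n W0). reflexivity.
    - unfold Dl. norm. mring. }
  assert (DW : mnorm n n (msub Wh W0) <= mnorm n n Wh * mnorm n n Dl * w).
  { rewrite (mnorm_meq _ _ _ _ F3), mnorm_opp. eapply Rle_trans. apply mnorm_mul.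
    rewrite Rmult_assoc. apply Rmult_le_compat_l. apply mnorm_nonneg. apply mnorm_mul. }
  assert (F4 : mnorm n n Wh <= 2 * w).
  { assert (mnorm n n Wh <= w + mnorm n n (msub Wh W0)).
    { rewrite (mnorm_meq n n Wh (madd W0 (msub Wh W0))) by mring. apply mnorm_add. }
    assert (Hdw : mnorm n n Dl * w <= / 2).
    { apply Rle_trans with (/ (2 * (w + 1)) * w). apply Rmult_le_compat_r; lra.
      apply Rle_trans with (/ (2 * (w + 1)) * (w + 1)). apply Rmult_le_compat_l. left; apply Rinv_0_lt_compat; lra. lra.
      right; field; lra. }
    pose proof (mnorm_nonneg n n Wh). pose proof (mnorm_nonneg n n Dl). nra. }
  assert (F5 : meq n n (msub (mscale (/ h) (msub Wh W0)) (mopp (mmul n W0 (mmul n Md W0))))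
                 (mopp (madd (mmul n Wh (mmul n (msub sD Md) W0)) (mmul n (msub Wh W0) (mmul n Md W0))))).
  { rewrite F3 at 1.
    assert (E1 : mscale (/ h) (mopp (mmul n Wh (mmul n Dl W0))) = mopp (mmul n Wh (mmul n sD W0))).
    { unfold sD. rewrite mmul_scale_l, mmul_scale_r. apply mat_ext; intros; unfold mscale, mopp; cring. }
    rewrite E1. norm. mring. }
  rewrite (mnorm_meq _ _ _ _ F5), mnorm_opp.
  eapply Rle_lt_trans; [apply mnorm_add| ].
  assert (X1 : mnorm n n (mmul n Wh (mmul n (msub sD Md) W0)) <= 2 * w * q * w).
  { eapply Rle_trans. apply mnorm_mul. apply Rle_trans with (mnorm n n Wh * (q * w)).
    apply Rmult_le_compat_l. apply mnorm_nonneg. apply mnorm_mul.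
    pose proof (mnorm_nonneg n n Wh). assert (0 <= q * w) by (apply Rmult_le_pos; auto).
    apply Rle_trans with (2 * w * (q * w)). apply Rmult_le_compat_r; auto. right; ring. }
  assert (X2 : mnorm n n (mmul n (msub Wh W0) (mmul n Md W0)) <= 2 * w * b * w * md * w).
  { eapply Rle_trans. apply mnorm_mul. apply Rle_trans with (mnorm n n (msub Wh W0) * (md * w)).
    apply Rmult_le_compat_l. apply mnorm_nonneg. apply mnorm_mul.
    assert (0 <= md * w) by (apply Rmult_le_pos; auto).
    apply Rle_trans with ((mnorm n n Wh * mnorm n n Dl * w) * (md * w)). apply Rmult_le_compat_r; auto.
    pose proof (mnorm_nonneg n n Wh). pose proof (mnorm_nonneg n n Dl).
    apply Rle_trans with ((2 * w * b * w) * (md * w)). apply Rmult_le_compat_r; auto.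
    apply Rmult_le_compat_r; auto. apply Rle_trans with (2 * w * mnorm n n Dl). apply Rmult_le_compat_r; auto.
    apply Rmult_le_compat_l; lra. right; ring. }
  assert (Hq1 : q < e / K) by exact H1.
  assert (Hww : 0 <= w * w) by (apply Rmult_le_pos; auto).
  assert (Hwwwm : 0 <= w * w * w * md) by (repeat apply Rmult_le_pos; auto).
  apply Rle_lt_trans with (2 * (w * w) * q + 2 * (w * w * w * md) * b).
  { replace (2 * (w * w) * q + 2 * (w * w * w * md) * b) with (2 * w * q * w + 2 * w * b * w * md * w) by ring. lra. }
  apply Rle_lt_trans with ((2 * (w * w) + 2 * (w * w * w * md)) * (e / K)).
  { assert (2 * (w * w) * q <= 2 * (w * w) * (e / K)) by (apply Rmult_le_compat_l; lra).
    assert (2 * (w * w * w * md) * b <= 2 * (w * w * w * md) * (e / K)) by (apply Rmult_le_compat_l; lra). lra. }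
  assert (0 < e / K) by (apply Rdiv_lt_0_compat; auto).
  apply Rlt_le_trans with (K * (e / K)). apply Rmult_lt_compat_r; auto. unfold K; lra.
  right; field; lra.
Qed.

Lemma final_alg n m Sg Si K U V X Xp Xm W Wp Wm Xd :
  meq n n (mmul n Sg Si) mI -> meq n n (mmul n Si Sg) mI ->
  meq n n (msub (mmul n Si (mmul n X K)) (mmul n (mmul n X K) Sg)) (mmul n X (mmul m V U)) ->
  meq n n (msub (mmul n Si (mmul n Xm K)) (mmul n (mmul n Xm K) Sg)) (mmul n Xm (mmul m V U)) ->
  meq n n Xp (mmul n Sg X) -> meq n n X (mmul n Sg Xm) ->
  isinv n (madd mI (mmul n (mmul n X K) (mmul n X K))) W ->
  isinv n (madd mI (mmul n (mmul n Xp K) (mmul n Xp K))) Wp ->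
  isinv n (madd mI (mmul n (mmul n Xm K) (mmul n Xm K))) Wm ->
  meq n n Xd (mopp (msub (mmul n Sg X) (mmul n Si X))) ->
  let Vc := mopp (mmul n (mmul n (mmul n U W) X) V) in
  let Vp := mopp (mmul n (mmul n (mmul n U Wp) Xp) V) in
  let Vm := mopp (mmul n (mmul n (mmul n U Wm) Xm) V) in
  let IV2 := madd mI (mmul m Vc Vc) in
  meq m m (mopp (mmul n (madd (mmul n (mmul n U (mopp (mmul n W (mmul n (madd (mmul n (mmul n Xd K) (mmul n X K)) (mmul n (mmul n X K) (mmul n Xd K))) W)))) X) (mmul n (mmul n U W) Xd)) V))
        (mopp (msub (mmul m Vp IV2) (mmul m IV2 Vm))).
Proof.
  intros HS1 HS2 Ha Ham HXp HX HW HWp HWm HXd Vc Vp Vm IV2.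
  assert (HTp : meq n n (mmul n Xp K) (mmul n Sg (mmul n X K))) by (rewrite HXp; norm; reflexivity).
  assert (HT : meq n n (mmul n X K) (mmul n Sg (mmul n Xm K))) by (rewrite HX at 1; norm; reflexivity).
  assert (HTd : meq n n (mmul n Xd K) (mopp (msub (mmul n Sg (mmul n X K)) (mmul n Si (mmul n X K))))) by (rewrite HXd; norm; reflexivity).
  pose proof (m_main n Sg Si (mmul m V U) X Xp Xm (mmul n X K) (mmul n Xp K) (mmul n Xm K) W Wp Wm Xd (mmul n Xd K)
     HS1 HS2 Ha Ham HXp HTp HX HT HW HWp HWm HXd HTd) as MM.
  transitivity (mopp (mmul n (mmul n U (madd (mopp (mmul n W (mmul n (madd (mmul n (mmul n Xd K) (mmul n X K)) (mmul n (mmul n X K) (mmul n Xd K))) (mmul n W X)))) (mmul n W Xd))) V)).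
  { norm. reflexivity. }
  rewrite MM. unfold IV2, Vp, Vm, Vc.
  rewrite mmul_add_r, mmul_add_l.
  rewrite (meq_I_r m m (mopp (mmul n (mmul n (mmul n U Wp) Xp) V))).
  rewrite (meq_I_l m m (mopp (mmul n (mmul n (mmul n U Wm) Xm) V))).
  norm. mring.
Qed.

Definition mz : Mat := fun _ _ => C0.
Lemma mmul_0_l p A : mmul p mz A = mz.
Proof. apply mat_ext; intros; unfold mmul, mz. rewrite (Csum_ext _ (fun _ => C0)). apply Csum_zero. intros; cring. Qed.
Lemma mmul_0_r p A : mmul p A mz = mz.
Proof. apply mat_ext; intros; unfold mmul, mz. rewrite (Csum_ext _ (fun _ => C0)). apply Csum_zero. intros; cring. Qed.
Lemma madd_0_l A : madd mz A = A.
Proof. apply mat_ext; intros; unfold madd, mz. cring. Qed.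
Lemma madd_0_r A : madd A mz = A.
Proof. apply mat_ext; intros; unfold madd, mz. cring. Qed.

Theorem mainTheorem16
  (n m : nat) (S Sinv U V K : Mat) (E : R -> Mat) (W : Z -> R -> Mat)
  (x0 : Z) (t0 eps : R)
  (HS1 : meq n n (mmul n S Sinv) mI) (HS2 : meq n n (mmul n Sinv S) mI)
  (HK : meq n n (msub (mmul n Sinv K) (mmul n K S)) (mmul m V U))
  (HE : forall t, is_mexp n (mscale (- t) (msub S Sinv)) (E t))
  (Heps : 0 < eps)
  (HW : forall y s, (y = (x0 - 1)%Z \/ y = x0 \/ y = (x0 + 1)%Z) ->
     Rabs (s - t0) < eps ->
     let XK := mmul n (mmul n (mpowZ n S Sinv y) (E s)) K in
     let Mm := madd mI (mmul n XK XK) in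
     meq n n (mmul n (W y s) Mm) mI /\ meq n n (mmul n Mm (W y s)) mI) :
  let calV := fun (y : Z) (s : R) =>
    mopp (mmul n (mmul n (mmul n U (W y s)) (mmul n (mpowZ n S Sinv y) (E s))) V) in
  let Vc := calV x0 t0 in
  let Vp := calV (x0 + 1)%Z t0 in
  let Vm := calV (x0 - 1)%Z t0 in
  let IV2 := madd mI (mmul m Vc Vc) in
  mderiv_at m m (calV x0) t0
    (mopp (msub (mmul m Vp IV2) (mmul m IV2 Vm))).
Proof.
  intros calV Vc Vp Vm IV2.
  set (A := msub S Sinv) in HE.
  assert (HAS : meq n n (mmul n A S) (mmul n S A)).
  { unfold A. rewrite mmul_sub_l, mmul_sub_r, HS1, HS2. reflexivity. }
  assert (HASi : meq n n (mmul n Sinv A) (mmul n A Sinv)) by (apply comm_inv with S; auto; symmetry; auto).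
  assert (HES : meq n n (mmul n S (E t0)) (mmul n (E t0) S)) by (apply (E_comm n A E HE); auto).
  assert (HESi : meq n n (mmul n Sinv (E t0)) (mmul n (E t0) Sinv)) by (apply comm_inv with S; auto).
  assert (HPSi : forall y, meq n n (mmul n (mpowZ n S Sinv y) Sinv) (mmul n Sinv (mpowZ n S Sinv y))).
  { intros y. apply mpowZ_comm. rewrite HS1, HS2; reflexivity. reflexivity. }
  assert (HPA : forall y, meq n n (mmul n (mpowZ n S Sinv y) A) (mmul n A (mpowZ n S Sinv y))).
  { intros y. apply mpowZ_comm. symmetry; auto. auto. }
  set (Xf := fun y => mmul n (mpowZ n S Sinv y) (E t0)).
  assert (HSiX : forall y, meq n n (mmul n Sinv (Xf y)) (mmul n (Xf y) Sinv)).
  { intros y. unfold Xf. rewrite <- mmul_assoc, <- HPSi, mmul_assoc, HESi, <- mmul_assoc. reflexivity. }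
  assert (Ha : forall y, meq n n (msub (mmul n Sinv (mmul n (Xf y) K)) (mmul n (mmul n (Xf y) K) S)) (mmul n (Xf y) (mmul m V U))).
  { intros y. transitivity (mmul n (Xf y) (msub (mmul n Sinv K) (mmul n K S))).
    { rewrite <- (mmul_assoc n n Sinv (Xf y) K), HSiX. norm. reflexivity. }
    rewrite HK. reflexivity. }
  assert (HXp : meq n n (Xf (x0 + 1)%Z) (mmul n S (Xf x0))).
  { unfold Xf. rewrite (mpowZ_succ n S Sinv x0 HS1). norm. reflexivity. }
  assert (HX : meq n n (Xf x0) (mmul n S (Xf (x0 - 1)%Z))).
  { unfold Xf. pose proof (mpowZ_succ n S Sinv (x0 - 1) HS1) as H.
    replace (x0 - 1 + 1)%Z with x0 in H by ring. rewrite H. norm. reflexivity. }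
  assert (Ht0 : Rabs (t0 - t0) < eps) by (rewrite Rminus_diag, Rabs_R0; auto).
  assert (HW0 : isinv n (madd mI (mmul n (mmul n (Xf x0) K) (mmul n (Xf x0) K))) (W x0 t0)).
  { exact (HW x0 t0 ltac:(auto) Ht0). }
  assert (HWp : isinv n (madd mI (mmul n (mmul n (Xf (x0+1)%Z) K) (mmul n (Xf (x0+1)%Z) K))) (W (x0+1)%Z t0)).
  { exact (HW (x0+1)%Z t0 ltac:(auto) Ht0). }
  assert (HWm : isinv n (madd mI (mmul n (mmul n (Xf (x0-1)%Z) K) (mmul n (Xf (x0-1)%Z) K))) (W (x0-1)%Z t0)).
  { exact (HW (x0-1)%Z t0 ltac:(auto) Ht0). }
  set (P := mpowZ n S Sinv x0).
  set (Xd := mmul n P (mopp (mmul n A (E t0)))).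
  assert (HXd : meq n n Xd (mopp (msub (mmul n S (Xf x0)) (mmul n Sinv (Xf x0))))).
  { unfold Xd, Xf, P. rewrite mmul_opp_r, <- mmul_assoc, HPA, mmul_assoc. unfold A. rewrite mmul_sub_l. reflexivity. }
  pose proof (final_alg n m S Sinv K U V (Xf x0) (Xf (x0+1)%Z) (Xf (x0-1)%Z) (W x0 t0) (W (x0+1)%Z t0) (W (x0-1)%Z t0) Xd
    HS1 HS2 (Ha x0) (Ha (x0-1)%Z) HXp HX HW0 HWp HWm HXd) as FA.
  pose proof (E_deriv n A E HE t0) as DE.
  pose proof (mderiv_mul n n n (fun _ => P) E t0 mz _ (mderiv_const n n P t0) DE) as DX.
  pose proof (mderiv_mul n n n (fun s => mmul n P (E s)) (fun _ => K) t0 _ mz DX (mderiv_const n n K t0)) as DT.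
  pose proof (mderiv_add n n (fun _ => mI) _ t0 mz _ (mderiv_const n n mI t0) (mderiv_mul n n n _ _ t0 _ _ DT DT)) as DM.
  assert (Hinv : forall s, Rabs (s - t0) < eps -> isinv n ((fun s => madd mI (mmul n (mmul n (mmul n P (E s)) K) (mmul n (mmul n P (E s)) K))) s) (W x0 s)).
  { intros s Hs. exact (HW x0 s ltac:(auto) Hs). }
  pose proof (inv_deriv n _ (W x0) t0 eps _ Heps Hinv DM) as DW.
  pose proof (mderiv_mul m n n (fun _ => U) (W x0) t0 mz _ (mderiv_const m n U t0) DW) as DG1.
  pose proof (mderiv_mul m n n _ _ t0 _ _ DG1 DX) as DG2.
  pose proof (mderiv_mul m n m _ (fun _ => V) t0 _ mz DG2 (mderiv_const n m V t0)) as DG3.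
  pose proof (mderiv_opp m m _ t0 _ DG3) as DG4.
  eapply mderiv_ext; [intros s; reflexivity| |exact DG4].
  simpl. rewrite !mmul_0_l, !mmul_0_r, !madd_0_l, !madd_0_r.
  fold P. fold Xd. unfold Vp, Vm, Vc, IV2, calV. fold P.
  change (mmul n P (E t0)) with (Xf x0).
  exact FA.
Qed.
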